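(* Let $S$ be a nonempty set and $G$ a group of permutations of $S$, and suppose that $G$ and $SV_G$ are both finitely generated, equipped with word metrics from finite generating sets. Then there exists a coarse Lipschitz map $\rho\colon SV_G\to G$ such that $\rho\circ\iota_\varnothing$ is the identity of $G$. In particular, $G$ is a quasi-retract of $SV_G$, and $\iota_\varnothing$ is a quasi-isometric embedding of $G$ into $SV_G$.
   Context: Let $\mathfrak C=\{0,1\}^{\omega}$ be the Cantor set, $S$ a nonempty set, and $G$ a subgroup of the symmetric group of $S$. Let $\mathfrak C^S$ be the space of all functions $S\to\mathfrak C$ with the product topology. For a function $\psi\colon S\to\{0,1\}^*$ with $\psi(s)=\varnothing$ for all but finitely many $s$, the dyadic brick $B(\psi)$ is the set of $\kappa\in\mathfrak C^S$ such that $\psi(s)$ is a prefix of $\kappa(s)$ for all $s\in S$; the canonical homeomorphism $\Phi_\psi\colon\mathfrak C^S\to B(\psi)$ is $\Phi_\psi(\kappa)(s)=\psi(s)\cdot\kappa(s)$. For $\gamma\in G$ let $\tau_\gamma\colon\mathfrak C^S\to\mathfrak C^S$ be $\tau_\gamma(\kappa)(s)=\kappa(\gamma^{-1}s)$. The twist homeomorphism $B(\varphi)\to B(\psi)$ associated to $\gamma$ is $\Phi_\psi\circ\tau_\gamma\circ\Phi_\varphi^{-1}$. The twisted Brin–Thompson group $SV_G$ is the group of all homeomorphisms $h$ of $\mathfrak C^S$ for which there exist two partitions $B(\varphi_1),\dots,B(\varphi_n)$ and $B(\psi_1),\dots,B(\psi_n)$ of $\mathfrak C^S$ into dyadic bricks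 and $\gamma_1,\dots,\gamma_n\in G$ such that $h|_{B(\varphi_i)}$ is the twist homeomorphism $B(\varphi_i)\to B(\psi_i)$ associated to $\gamma_i$. The embedding $\iota_\varnothing\colon G\to SV_G$ is $\iota_\varnothing(\gamma)=\tau_\gamma$. A map $f\colon X\to Y$ of metric spaces is coarse Lipschitz if $d(f(x),f(x'))\le C\,d(x,x')+D$ for some constants $C,D>0$ and all $x,x'$. It is a quasi-isometric embedding if moreover $d(f(x),f(x'))\ge \frac1C d(x,x')-D$. $Y$ is a quasi-retract of $X$ if there exist coarse Lipschitz maps $\rho\colon X\to Y$ and $\iota\colon Y\to X$ and $E>0$ with $d(\rho(\iota(y)),y)\le E$ for all $y\in Y$. *)

(* Defs.v *)
From Stdlib Require Import Reals Lra Lia List Arith ClassicalEpsilon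
  FunctionalExtensionality ProofIrrelevance.
Import ListNotations.
Set Implicit Arguments.

Record Perm (T : Type) := mkPerm {
  pf : T -> T;
  pinv : T -> T;
  pK : forall x, pinv (pf x) = x;
  pKV : forall x, pf (pinv x) = x }.

Definition pid (T : Type) : Perm T :=
  @mkPerm T (fun x => x) (fun x => x) (fun _ => eq_refl) (fun _ => eq_refl).

Lemma pcomp_K T (a b : Perm T) x : pinv b (pinv a (pf a (pf b x))) = x.
Proof. now rewrite !pK. Qed.
Lemma pcomp_KV T (a b : Perm T) x : pf a (pf b (pinv b (pinv a x))) = x.
Proof. now rewrite !pKV. Qed.

Definition pcomp T (a b : Perm T) : Perm T :=
  @mkPerm T (fun x => pf a (pf b x)) (fun x => pinv b (pinv a x))
    (pcomp_K a b) (pcomp_KV a b).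

Definition pinvp T (a : Perm T) : Perm T :=
  @mkPerm T (pinv a) (pf a) (pKV a) (pK a).

Definition is_subgroup T (G : Perm T -> Prop) : Prop :=
  G (pid T) /\ (forall a b, G a -> G b -> G (pcomp a b)) /\
  (forall a, G a -> G (pinvp a)).

Definition letter T (l : bool * Perm T) : Perm T :=
  if fst l then pinvp (snd l) else snd l.

Definition eval_word T (w : list (bool * Perm T)) : Perm T :=
  fold_right (fun l acc => pcomp (letter l) acc) (pid T) w.

Definition word_in T (X : list (Perm T)) (w : list (bool * Perm T)) : Prop :=
  Forall (fun l => In (snd l) X) w.

Definition generates T (G : Perm T -> Prop) (X : list (Perm T)) : Prop :=
  (forall x, In x X -> G x) /\
  (forall g, G g -> exists w, word_in X w /\ eval_word w = g).

Definition wlen_le T (X : list (Perm T)) (g : Perm T) (n : nat) : Prop :=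
  exists w, word_in X w /\ length w <= n /\ eval_word w = g.

Definition word_length T (X : list (Perm T)) (g : Perm T) : nat :=
  epsilon (inhabits 0%nat)
    (fun n => wlen_le X g n /\ forall m, wlen_le X g m -> n <= m).

Definition word_dist T (X : list (Perm T)) (x y : Perm T) : R :=
  INR (word_length X (pcomp (pinvp x) y)).

Local Open Scope R_scope.
Definition coarse_lipschitz (A B : Type) (dA : A -> A -> R) (dB : B -> B -> R)
  (f : A -> B) : Prop :=
  exists C D : R, 0 < C /\ 0 < D /\
    forall x x', dB (f x) (f x') <= C * dA x x' + D.

Definition qi_embedding (A B : Type) (dA : A -> A -> R) (dB : B -> B -> R)
  (f : A -> B) : Prop :=
  exists C D : R, 0 < C /\ 0 < D /\
    forall x x', dB (f x) (f x') <= C * dA x x' + D /\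
                 dB (f x) (f x') >= / C * dA x x' - D.

Definition quasi_retract (A B : Type) (dA : A -> A -> R) (dB : B -> B -> R) : Prop :=
  exists (rho : A -> B) (iota : B -> A) (E : R),
    coarse_lipschitz dA dB rho /\ coarse_lipschitz dB dA iota /\ 0 < E /\
    forall y, dB (rho (iota y)) y <= E.

Local Close Scope R_scope.
Definition Cantor := nat -> bool.
Definition Conf (S : Type) := S -> Cantor.

Definition is_prefix (w : list bool) (c : Cantor) : Prop :=
  forall i, i < length w -> c i = nth i w false.

Definition fin_supp S (psi : S -> list bool) : Prop :=
  exists L : list S, forall s, psi s <> [] -> In s L.

Definition in_brick S (psi : S -> list bool) (k : Conf S) : Prop :=
  forall s, is_prefix (psi s) (k s).

Definition app_word (w : list bool) (c : Cantor) : Cantor :=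
  fun n => if n <? length w then nth n w false else c (n - length w).

Definition Phi S (psi : S -> list bool) (k : Conf S) : Conf S :=
  fun s => app_word (psi s) (k s).
Definition Phi_inv S (phi : S -> list bool) (k : Conf S) : Conf S :=
  fun s n => k s (n + length (phi s)).

Definition tau S (g : Perm S) (k : Conf S) : Conf S := fun s => k (pinv g s).

Definition twist S (phi psi : S -> list bool) (g : Perm S) (k : Conf S) : Conf S :=
  Phi psi (tau g (Phi_inv phi k)).

Definition brick_partition S (n : nat) (phi : nat -> S -> list bool) : Prop :=
  (forall i, i < n -> fin_supp (phi i)) /\
  (forall k : Conf S, exists i, i < n /\ in_brick (phi i) k) /\
  (forall i j (k : Conf S), i < n -> j < n ->
      in_brick (phi i) k -> in_brick (phi j) k -> i = j).

(* continuity for the product topology on C^S; the dyadic bricks form a basis *)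
Definition continuous S (f : Conf S -> Conf S) : Prop :=
  forall psi k, fin_supp psi -> in_brick psi (f k) ->
    exists phi, fin_supp phi /\ in_brick phi k /\
      forall k', in_brick phi k' -> in_brick psi (f k').

Definition homeomorphism S (h : Perm (Conf S)) : Prop :=
  continuous (pf h) /\ continuous (pinv h).

Definition SV S (G : Perm S -> Prop) (h : Perm (Conf S)) : Prop :=
  homeomorphism h /\
  exists (n : nat) (phi psi : nat -> S -> list bool) (g : nat -> Perm S),
    brick_partition n phi /\ brick_partition n psi /\
    forall i, i < n -> G (g i) /\
      forall k, in_brick (phi i) k -> pf h k = twist (phi i) (psi i) (g i) k.

Definition GType S (G : Perm S -> Prop) := { g : Perm S | G g }.
Definition SVType S (G : Perm S -> Prop) := { h : Perm (Conf S) | SV G h }.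

Definition dG S (G : Perm S -> Prop) (X : list (Perm S)) (x y : GType G) : R :=
  word_dist X (proj1_sig x) (proj1_sig y).
Definition dSV S (G : Perm S -> Prop) (X : list (Perm (Conf S))) (x y : SVType G) : R :=
  word_dist X (proj1_sig x) (proj1_sig y).

Definition tauPerm S (g : Perm S) : Perm (Conf S).
Proof.
  refine (@mkPerm (Conf S) (tau g) (fun k s => k (pf g s)) _ _);
  intro k; apply functional_extensionality; intro s; unfold tau;
  [now rewrite pK | now rewrite pKV].
Defined.

Lemma cont_reindex S (f g : S -> S) :
  (forall s, f (g s) = s) -> (forall s, g (f s) = s) ->
  continuous (fun (k : Conf S) s => k (f s)).
Proof.
  intros H1 H2 psi k [L HL] Hk.
  exists (fun s => psi (g s)); repeat split.
  - exists (map f L); intros s Hs. apply HL in Hs.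
    rewrite <- (H1 s). now apply in_map.
  - intros s. specialize (Hk (g s)). simpl in Hk. now rewrite H1 in Hk.
  - intros k' Hk' s. specialize (Hk' (f s)). simpl in Hk'. now rewrite H2 in Hk'.
Qed.

Lemma nil_brick_partition S : brick_partition 1 (fun _ (_ : S) => @nil bool).
Proof.
  repeat split.
  - intros i _. exists []. intros s H. now elim H.
  - intros k. exists 0. split; [lia|]. intros s i Hi. simpl in Hi. lia.
  - intros i j k Hi Hj _ _. lia.
Qed.

Lemma tau_SV S (G : Perm S -> Prop) (g : Perm S) : G g -> SV G (tauPerm g).
Proof.
  intros Hg. split.
  - split.
    + apply (@cont_reindex S (pinv g) (pf g)); intro s; [apply pK | apply pKV].
    + apply (@cont_reindex S (pf g) (pinv g)); intro s; [apply pKV | apply pK].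
  - exists 1, (fun _ _ => []), (fun _ _ => []), (fun _ => g).
    split; [apply nil_brick_partition|]. split; [apply nil_brick_partition|].
    intros i _. split; [exact Hg|]. intros k _.
    apply functional_extensionality; intro s.
    apply functional_extensionality; intro n.
    unfold twist, Phi, Phi_inv, tau, app_word; simpl.
    now rewrite Nat.sub_0_r, Nat.add_0_r.
Qed.

Definition iota0 S (G : Perm S -> Prop) (g : GType G) : SVType G :=
  exist _ (tauPerm (proj1_sig g)) (@tau_SV S G (proj1_sig g) (proj2_sig g)).

(* Main.v *)
Require Import Defs.
From Stdlib Require Import Reals List Lra Lia Arith ClassicalEpsilon FunctionalExtensionality ProofIrrelevance Classical.
Import ListNotations.
Set Implicit Arguments.

Lemma perm_ext T (a b : Perm T) : (forall x, pf a x = pf b x) -> a = b.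
Proof.
  intros H.
  assert (Hi : forall y, pinv a y = pinv b y).
  { intros y. rewrite <- (pK b (pinv a y)). rewrite <- H, pKV. reflexivity. }
  destruct a as [fa ia Ka KVa], b as [fb ib Kb KVb]; simpl in *.
  assert (fa = fb) by (apply functional_extensionality; exact H).
  assert (ia = ib) by (apply functional_extensionality; exact Hi).
  subst. f_equal; apply proof_irrelevance.
Qed.

Definition Lmap S (g : Perm S) (u : S -> list bool) (m : S -> nat) (k : Conf S) : Conf S :=
  fun s n => if n <? length (u s) then nth n (u s) false
             else k (pinv g s) (n - length (u s) + m s).
Definition agree S (len : S -> nat) (k k' : Conf S) : Prop :=
  forall t n, n < len t -> k t n = k' t n.
Definition germ S (h : Perm (Conf S)) (p : Conf S) (g : Perm S) : Prop :=
  exists u m len, forall k, agree len k p -> pf h k = Lmap g u m k.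

Lemma germ_unique S (h : Perm (Conf S)) p g1 g2 : germ h p g1 -> germ h p g2 -> g1 = g2.
Proof.
  intros [u1 [m1 [l1 H1]]] [u2 [m2 [l2 H2]]].
  assert (Hi : forall s, pinv g1 s = pinv g2 s).
  { intros s. apply NNPP. intros Hab.
    remember (pinv g1 s) as a. remember (pinv g2 s) as b.
    set (k := fun t n => if n <? l1 t + l2 t then p t n
                 else if excluded_middle_informative (t = b) then true else false).
    assert (A1 : agree l1 k p).
    { intros t n Hn. unfold k. destruct (Nat.ltb_spec n (l1 t + l2 t)); [reflexivity| lia]. }
    assert (A2 : agree l2 k p).
    { intros t n Hn. unfold k. destruct (Nat.ltb_spec n (l1 t + l2 t)); [reflexivity| lia]. }
    pose proof (H1 k A1) as E1. pose proof (H2 k A2) as E2.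
    rewrite E1 in E2.
    set (n := length (u1 s) + length (u2 s) + l1 a + l2 a + l1 b + l2 b).
    pose proof (f_equal (fun c => c s n) E2) as E3. unfold Lmap in E3. cbv beta in E3.
    rewrite <- Heqa, <- Heqb in E3.
    destruct (Nat.ltb_spec n (length (u1 s))); [lia|].
    destruct (Nat.ltb_spec n (length (u2 s))); [lia|].
    unfold k in E3.
    destruct (Nat.ltb_spec (n - length (u1 s) + m1 s) (l1 a + l2 a)); [lia|].
    destruct (Nat.ltb_spec (n - length (u2 s) + m2 s) (l1 b + l2 b)); [lia|].
    destruct (excluded_middle_informative (a = b)); [contradiction|].
    destruct (excluded_middle_informative (b = b)); [discriminate|congruence]. }
  apply perm_ext. intros x.
  rewrite <- (pKV g2 (pf g1 x)) at 1. rewrite <- Hi, pK. reflexivity.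
Qed.

Lemma Lmap_agree S (g : Perm S) u m (l : S -> nat) k k' :
  agree (fun t => l (pf g t) + m (pf g t)) k k' -> agree l (Lmap g u m k) (Lmap g u m k').
Proof.
  intros H s n Hn. unfold Lmap.
  destruct (n <? length (u s)); [reflexivity|].
  apply H. rewrite pKV. lia.
Qed.

Lemma Lmap_comp S (g1 g2 : Perm S) u1 m1 u2 m2 k :
  Lmap g1 u1 m1 (Lmap g2 u2 m2 k) =
  Lmap (pcomp g1 g2)
    (fun s => if m1 s <=? length (u2 (pinv g1 s)) then u1 s ++ skipn (m1 s) (u2 (pinv g1 s)) else u1 s)
    (fun s => if m1 s <=? length (u2 (pinv g1 s)) then m2 (pinv g1 s) else m2 (pinv g1 s) + (m1 s - length (u2 (pinv g1 s))))
    k.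
Proof.
  apply functional_extensionality; intro s.
  apply functional_extensionality; intro n.
  unfold Lmap; simpl.
  set (s' := pinv g1 s).
  destruct (Nat.leb_spec (m1 s) (length (u2 s'))).
  - rewrite length_app, length_skipn.
    destruct (Nat.ltb_spec n (length (u1 s))).
    + destruct (Nat.ltb_spec n (length (u1 s) + (length (u2 s') - m1 s))); [|lia].
      rewrite app_nth1; auto.
    + destruct (Nat.ltb_spec (n - length (u1 s) + m1 s) (length (u2 s'))).
      * destruct (Nat.ltb_spec n (length (u1 s) + (length (u2 s') - m1 s))); [|lia].
        rewrite app_nth2 by lia. rewrite nth_skipn. f_equal; lia.
      * destruct (Nat.ltb_spec n (length (u1 s) + (length (u2 s') - m1 s))); [lia|].
        f_equal; lia.
  - destruct (Nat.ltb_spec n (length (u1 s))); [reflexivity|].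
    destruct (Nat.ltb_spec (n - length (u1 s) + m1 s) (length (u2 s'))); [lia|].
    f_equal; lia.
Qed.

Lemma germ_comp S (h1 h2 : Perm (Conf S)) p g1 g2 :
  germ h2 p g2 -> germ h1 (pf h2 p) g1 -> germ (pcomp h1 h2) p (pcomp g1 g2).
Proof.
  intros [u2 [m2 [l2 H2]]] [u1 [m1 [l1 H1]]].
  eexists; eexists. exists (fun t => l2 t + (l1 (pf g2 t) + m2 (pf g2 t))).
  intros k Hk. simpl.
  assert (Hk2 : agree l2 k p) by (intros t n Hn; apply Hk; lia).
  rewrite (H2 k Hk2).
  rewrite H1; [apply Lmap_comp|].
  rewrite (H2 p (fun _ _ _ => eq_refl)).
  apply Lmap_agree. intros t n Hn. apply Hk. lia.
Qed.

Lemma germ_pid S (p : Conf S) : germ (pid (Conf S)) p (pid S).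
Proof.
  exists (fun _ => []), (fun _ => 0), (fun _ => 0). intros k _. simpl.
  apply functional_extensionality; intro s.
  apply functional_extensionality; intro n.
  unfold Lmap; simpl. rewrite Nat.sub_0_r, Nat.add_0_r. reflexivity.
Qed.

Lemma germ_tau S (g : Perm S) (p : Conf S) : germ (pinvp (tauPerm g)) p (pinvp g).
Proof.
  exists (fun _ => []), (fun _ => 0), (fun _ => 0). intros k _. simpl.
  apply functional_extensionality; intro s.
  apply functional_extensionality; intro n.
  unfold Lmap; simpl. rewrite Nat.sub_0_r, Nat.add_0_r. reflexivity.
Qed.

Lemma agree_brick S (phi : S -> list bool) k p :
  in_brick phi p -> agree (fun t => length (phi t)) k p -> in_brick phi k.
Proof. intros Hp Ha s i Hi. rewrite Ha by exact Hi. apply Hp, Hi. Qed.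

Lemma twist_Lmap S phi psi (g : Perm S) k :
  twist phi psi g k = Lmap g psi (fun s => length (phi (pinv g s))) k.
Proof. reflexivity. Qed.

Lemma twist_in_brick S phi psi (g:Perm S) q : in_brick psi (twist phi psi g q).
Proof. intros s i Hi. unfold twist, Phi, app_word.
  destruct (Nat.ltb_spec i (length (psi s))); [reflexivity | lia]. Qed.

Lemma twist_inv S phi psi (g : Perm S) q :
  in_brick phi q -> q = twist psi phi (pinvp g) (twist phi psi g q).
Proof.
  intros Hq.
  apply functional_extensionality; intro t. apply functional_extensionality; intro n.
  unfold twist, Phi, Phi_inv, tau, app_word; simpl.
  rewrite pK.
  destruct (Nat.ltb_spec n (length (phi t))).
  - apply Hq; assumption.
  - destruct (Nat.ltb_spec (n - length (phi t) + length (psi (pf g t))) (length (psi (pf g t)))); [lia|].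
    f_equal; lia.
Qed.

Lemma eval_app T (w1 w2 : list (bool * Perm T)) :
  eval_word (w1 ++ w2) = pcomp (eval_word w1) (eval_word w2).
Proof. induction w1; simpl.
  - apply perm_ext; intro; reflexivity.
  - rewrite IHw1. apply perm_ext; intro; reflexivity. Qed.

Definition flip T (l : bool * Perm T) := (negb (fst l), snd l).
Definition winv T (w : list (bool * Perm T)) := rev (map (@flip T) w).

Lemma eval_winv T (w : list (bool * Perm T)) : eval_word (winv w) = pinvp (eval_word w).
Proof. induction w as [|[b x] w IH]; unfold winv in *; simpl.
  - apply perm_ext; intro; reflexivity.
  - rewrite eval_app, IH. apply perm_ext; intro y. destruct b; reflexivity. Qed.

Lemma word_in_winv T X (w : list (bool*Perm T)) : word_in X w -> word_in X (winv w).
Proof. unfold word_in, winv. rewrite !Forall_forall. intros H l Hl.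
  apply (proj2 (in_rev _ _)) in Hl.
  apply in_map_iff in Hl. destruct Hl as [l' [<- Hl']]. exact (H l' Hl'). Qed.

Lemma wlen_mono T X (g : Perm T) m n : wlen_le X g m -> m <= n -> wlen_le X g n.
Proof. intros [w [H1 [H2 H3]]] H. exists w. repeat split; auto; lia. Qed.

Lemma wlen_pid T X : wlen_le X (pid T) 0.
Proof. exists []. split; [constructor|split; [simpl; lia|reflexivity]]. Qed.

Lemma wlen_comp T X (a b : Perm T) m n :
  wlen_le X a m -> wlen_le X b n -> wlen_le X (pcomp a b) (m+n).
Proof. intros [w1 [A1 [B1 C1]]] [w2 [A2 [B2 C2]]]. exists (w1 ++ w2).
  split; [apply Forall_app; auto|]. split; [rewrite length_app; lia|].
  rewrite eval_app; congruence. Qed.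

Lemma wlen_inv T X (a : Perm T) m : wlen_le X a m -> wlen_le X (pinvp a) m.
Proof. intros [w [A [B C]]]. exists (winv w). split; [apply word_in_winv; auto|].
  split; [unfold winv; rewrite length_rev, length_map; auto|].
  rewrite eval_winv; congruence. Qed.

Lemma wlen_of_word T X (w : list (bool * Perm T)) : word_in X w -> wlen_le X (eval_word w) (length w).
Proof. intros H. exists w. auto. Qed.

Lemma least_ex (P : nat -> Prop) : forall n, P n -> exists k, P k /\ forall m, P m -> k <= m.
Proof.
  intros n; induction n as [n IH] using (well_founded_induction lt_wf); intros Hn.
  destruct (classic (exists m, m < n /\ P m)) as [[m [Hm Pm]]|Hno].
  - exact (IH m Hm Pm).
  - exists n. split; auto. intros m Pm. destruct (Nat.lt_ge_cases m n); auto.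
    exfalso; apply Hno; eauto.
Qed.

Lemma wl_spec T X (g : Perm T) n : wlen_le X g n ->
  wlen_le X g (word_length X g) /\ word_length X g <= n.
Proof. intros H. unfold word_length.
  destruct (epsilon_spec (inhabits 0) (fun k => wlen_le X g k /\ forall m, wlen_le X g m -> k <= m)) as [A B].
  - apply least_ex with n; exact H.
  - split; [exact A | apply B, H].
Qed.

Lemma eval_in_G S (G : Perm S -> Prop) XG w : is_subgroup G -> (forall x, In x XG -> G x) ->
  word_in XG w -> G (eval_word w).
Proof. intros [H1 [H2 H3]] HX Hw. induction Hw as [|[b x] w Hx Hw IH]; simpl.
  - exact H1.
  - apply H2; auto. simpl in Hx. destruct b; simpl; [apply H3|]; apply HX; exact Hx. Qed.

Lemma wlen_G S (G : Perm S -> Prop) XG g n : is_subgroup G -> (forall x, In x XG -> G x) ->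
  wlen_le XG g n -> G g.
Proof. intros HG HX [w [A [_ C]]]. subst. apply eval_in_G with XG; auto. Qed.

Lemma fin_max (P : nat -> nat -> Prop) n :
  (forall i a b, P i a -> a <= b -> P i b) ->
  (forall i, i < n -> exists a, P i a) -> exists M, forall i, i < n -> P i M.
Proof. intros Hm. induction n; intros H.
  - exists 0. intros; lia.
  - destruct IHn as [M HM]. { intros i Hi; apply H; lia. }
    destruct (H n) as [a Ha]; [lia|]. exists (M + a). intros i Hi.
    destruct (Nat.eq_dec i n); [subst; apply Hm with a; auto; lia|].
    apply Hm with M; [apply HM; lia | lia].
Qed.

Lemma gen_germ S (G : Perm S -> Prop) XG z :
  generates G XG -> SV G z ->
  exists M, forall p (b : bool), exists g, germ (letter (b, z)) p g /\ wlen_le XG g M.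
Proof.
  intros [_ Hgen] [_ [n [phi [psi [g [[_ [Pcov Pdis]] [[_ [Qcov Qdis]] Hg]]]]]]].
  destruct (@fin_max (fun i a => wlen_le XG (g i) a) n) as [M HM].
  { intros i a b H Hab. eapply wlen_mono; eauto. }
  { intros i Hi. destruct (Hgen (g i) (proj1 (Hg i Hi))) as [w [Hw Ew]].
    exists (length w). rewrite <- Ew. apply wlen_of_word; auto. }
  exists M. intros p b. destruct b.
  - destruct (Qcov p) as [j [Hj Bj]]. exists (pinvp (g j)). split; [|apply wlen_inv, HM, Hj].
    exists (phi j), (fun s => length (psi j (pinv (pinvp (g j)) s))), (fun t => length (psi j t)).
    intros k Hk. unfold letter; simpl.
    pose proof (agree_brick Bj Hk) as kB.
    destruct (Pcov (pinv z k)) as [i [Hi Bi]].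
    pose proof (proj2 (Hg i Hi) _ Bi) as Ei. rewrite pKV in Ei.
    assert (i = j). { apply Qdis with k; auto. rewrite Ei. apply twist_in_brick. }
    subst j. rewrite (twist_inv (psi i) (g i) Bi). rewrite <- Ei. reflexivity.
  - destruct (Pcov p) as [i [Hi Bi]]. exists (g i). split; [|apply HM, Hi].
    exists (psi i), (fun s => length (phi i (pinv (g i) s))), (fun t => length (phi i t)).
    intros k Hk. unfold letter; simpl. rewrite (proj2 (Hg i Hi) k (agree_brick Bi Hk)). reflexivity.
Qed.

Lemma gens_germ S (G : Perm S -> Prop) XG (XV : list (Perm (Conf S))) :
  generates G XG -> (forall z, In z XV -> SV G z) ->
  exists M, forall z, In z XV -> forall p b, exists g, germ (letter (b,z)) p g /\ wlen_le XG g M.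
Proof.
  intros HG. induction XV as [|a XV IH]; intros HX.
  - exists 0. intros z [].
  - destruct IH as [M HM]. { intros z Hz; apply HX; right; auto. }
    destruct (gen_germ HG (HX a (or_introl eq_refl))) as [M1 HM1].
    exists (M + M1). intros z [<-|Hz] p b.
    + destruct (HM1 p b) as [g [A B]]. exists g; split; auto. eapply wlen_mono; eauto; lia.
    + destruct (HM z Hz p b) as [g [A B]]. exists g; split; auto. eapply wlen_mono; eauto; lia.
Qed.

Lemma word_germ S XG (XV : list (Perm (Conf S))) M :
  (forall z, In z XV -> forall p b, exists g, germ (letter (b,z)) p g /\ wlen_le XG g M) ->
  forall w, word_in XV w -> forall p, exists g, germ (eval_word w) p g /\ wlen_le XG g (M * length w).
Proof.
  intros HM w Hw. induction Hw as [|[b z] w Hz Hw IH]; intros p; simpl.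
  - exists (pid S). split; [apply germ_pid|]. rewrite Nat.mul_0_r. apply wlen_pid.
  - destruct (IH p) as [g2 [A2 B2]]. simpl in Hz.
    destruct (HM z Hz (pf (eval_word w) p) b) as [g1 [A1 B1]].
    exists (pcomp g1 g2). split; [apply germ_comp; auto|].
    apply wlen_mono with (M + M * length w); [apply wlen_comp; assumption| lia].
Qed.

Lemma tau_word S (XG : list (Perm S)) XV K :
  (forall g, In g XG -> wlen_le XV (tauPerm g) K) ->
  forall w, word_in XG w -> wlen_le XV (tauPerm (eval_word w)) (K * length w).
Proof.
  intros HK w Hw. induction Hw as [|[b x] w Hx Hw IH]; simpl.
  - replace (tauPerm (pid S)) with (pid (Conf S)) by (apply perm_ext; intro; reflexivity).
    rewrite Nat.mul_0_r. apply wlen_pid.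
  - simpl in Hx.
    replace (tauPerm (pcomp (letter (b, x)) (eval_word w))) with
      (pcomp (tauPerm (letter (b, x))) (tauPerm (eval_word w))) by (apply perm_ext; intro; reflexivity).
    apply wlen_mono with (K + K * length w); [|lia].
    apply wlen_comp; [|exact IH].
    destruct b; unfold letter; simpl.
    + replace (tauPerm (pinvp x)) with (pinvp (tauPerm x)) by (apply perm_ext; intro; reflexivity).
      apply wlen_inv, HK, Hx.
    + apply HK, Hx.
Qed.

Lemma sig_eq S (G : Perm S -> Prop) (a b : Perm S) (pa : G a) (pb : G b) :
  a = b -> exist G a pa = exist G b pb.
Proof. intros ->. f_equal. apply proof_irrelevance. Qed.

Theorem theoremB (S : Type) (G : Perm S -> Prop)
  (XG : list (Perm S)) (XV : list (Perm (Conf S))) :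
  inhabited S ->
  is_subgroup G ->
  generates G XG ->
  generates (SV G) XV ->
  (exists rho : SVType G -> GType G,
      coarse_lipschitz (@dSV S G XV) (@dG S G XG) rho /\
      forall g : GType G, rho (iota0 g) = g) /\
  quasi_retract (@dSV S G XV) (@dG S G XG) /\
  qi_embedding (@dG S G XG) (@dSV S G XV) (@iota0 S G).
Proof.
  intros _ HG HXG HXV.
  pose proof HG as [Gid [Gcomp Ginv]].
  pose proof HXG as [XGin XGgen]. pose proof HXV as [XVin XVgen].
  set (k0 := fun (_ : S) (_ : nat) => false).
  destruct (@gens_germ S G XG XV HXG XVin) as [M HM].
  pose proof (word_germ HM) as WG.
  assert (ex : forall x : SVType G, exists g, germ (pinvp (proj1_sig x)) k0 g /\ G g).
  { intros [h Hh]; simpl. destruct (XVgen h Hh) as [w [Hw Ew]].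
    destruct (WG (winv w) (word_in_winv Hw) k0) as [g [A B]].
    exists g. split.
    - rewrite eval_winv, Ew in A. exact A.
    - eapply wlen_G; eauto. }
  assert (E : forall x : SVType G, {g | germ (pinvp (proj1_sig x)) k0 g /\ G g}).
  { intro x; apply constructive_indefinite_description; apply ex. }
  set (rho := fun x : SVType G =>
     exist G (pinvp (proj1_sig (E x))) (Ginv _ (proj2 (proj2_sig (E x))))).
  assert (Wsv : forall x y : SVType G, exists n,
             wlen_le XV (pcomp (pinvp (proj1_sig x)) (proj1_sig y)) n).
  { intros [hx Hx] [hy Hy]; simpl.
    destruct (XVgen hx Hx) as [wx [Ax Ex]]. destruct (XVgen hy Hy) as [wy [Ay Ey]].
    exists (length (winv wx ++ wy)).
    replace (pcomp (pinvp hx) hy) with (eval_word (winv wx ++ wy)).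
    - apply wlen_of_word. apply Forall_app; split; auto. apply word_in_winv; auto.
    - rewrite eval_app, eval_winv; congruence. }
  assert (Lrho : forall x y, word_length XG (pcomp (pinvp (proj1_sig (rho x))) (proj1_sig (rho y)))
      <= M * word_length XV (pcomp (pinvp (proj1_sig x)) (proj1_sig y))).
  { intros x y. destruct (Wsv x y) as [n0 Hn0].
    destruct (wl_spec Hn0) as [[w [Aw [Lw Ew]]] _].
    set (N := word_length XV (pcomp (pinvp (proj1_sig x)) (proj1_sig y))) in *.
    unfold rho; simpl.
    destruct (E x) as [gx [Hgx Ggx]]. destruct (E y) as [gy [Hgy Ggy]]. simpl.
    destruct x as [hx Hx], y as [hy Hy]; simpl in *.
    destruct (WG (winv w) (word_in_winv Aw) (pf (pinvp hx) k0)) as [gw [A B]].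
    pose proof (germ_comp Hgx A) as C.
    replace (pcomp (eval_word (winv w)) (pinvp hx)) with (pinvp hy) in C.
    2:{ rewrite eval_winv, Ew. apply perm_ext; intro k; simpl. rewrite pKV. reflexivity. }
    pose proof (germ_unique Hgy C) as D. subst gy.
    replace (pcomp (pinvp (pinvp gx)) (pinvp (pcomp gw gx))) with (pinvp gw).
    2:{ apply perm_ext; intro s; simpl. rewrite pKV. reflexivity. }
    apply wlen_inv in B. destruct (wl_spec B) as [_ B2].
    unfold winv in B2. rewrite length_rev, length_map in B2.
    eapply Nat.le_trans; [exact B2|]. apply Nat.mul_le_mono_l. exact Lw. }
  assert (Hri : forall g : GType G, rho (iota0 g) = g).
  { intros [g Hg]. unfold rho. apply sig_eq.
    simpl. set (e := E _). destruct e as [gx [Hgx Ggx]]. simpl.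
    simpl in Hgx. pose proof (germ_unique Hgx (germ_tau g k0)) as ->.
    apply perm_ext; intro; reflexivity. }
  assert (HK : exists K, forall g, In g XG -> wlen_le XV (tauPerm g) K).
  { clear -XGin XVgen. induction XG as [|a XG IH].
    - exists 0. intros g [].
    - destruct IH as [K HK]. { intros; apply XGin; right; auto. }
      destruct (XVgen _ (@tau_SV S G a (XGin a (or_introl eq_refl)))) as [w [Aw Ew]].
      exists (K + length w). intros g [<-|Hg].
      + rewrite <- Ew. eapply wlen_mono; [apply wlen_of_word; auto| lia].
      + eapply wlen_mono; [apply HK; auto| lia]. }
  destruct HK as [K HK].
  assert (Liota : forall a b : GType G,
    word_length XV (pcomp (pinvp (proj1_sig (iota0 a))) (proj1_sig (iota0 b)))
      <= K * word_length XG (pcomp (pinvp (proj1_sig a)) (proj1_sig b))).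
  { intros [a Ha] [b Hb]; simpl.
    replace (pcomp (pinvp (tauPerm a)) (tauPerm b)) with (tauPerm (pcomp (pinvp a) b))
      by (apply perm_ext; intro; reflexivity).
    destruct (XGgen _ (Gcomp _ _ (Ginv _ Ha) Hb)) as [w0 [A0 E0]].
    pose proof (wlen_of_word A0) as W0. rewrite E0 in W0.
    destruct (wl_spec W0) as [[w [Aw [Lw Ew]]] _].
    rewrite <- Ew. pose proof (tau_word HK Aw) as T.
    destruct (wl_spec T) as [_ T2]. eapply Nat.le_trans; [exact T2|].
    apply Nat.mul_le_mono_l. rewrite Ew. exact Lw. }
  assert (LR : forall x y, (@dG S G XG (rho x) (rho y) <= INR M * @dSV S G XV x y)%R).
  { intros x y. unfold dG, dSV, word_dist. rewrite <- mult_INR. apply le_INR, Lrho. }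
  assert (LI : forall a b, (@dSV S G XV (iota0 a) (iota0 b) <= INR K * @dG S G XG a b)%R).
  { intros a b. unfold dG, dSV, word_dist. rewrite <- mult_INR. apply le_INR, Liota. }
  assert (dSV0 : forall x y, (0 <= @dSV S G XV x y)%R) by (intros; apply pos_INR).
  assert (dG0 : forall x y, (0 <= @dG S G XG x y)%R) by (intros; apply pos_INR).
  pose proof (pos_INR M) as PM. pose proof (pos_INR K) as PK.
  assert (CLrho : coarse_lipschitz (@dSV S G XV) (@dG S G XG) rho).
  { exists (INR M + 1)%R, 1%R. split; [lra|]. split; [lra|].
    intros x x'. specialize (LR x x'). specialize (dSV0 x x'). nra. }
  assert (CLi : coarse_lipschitz (@dG S G XG) (@dSV S G XV) (@iota0 S G)).
  { exists (INR K + 1)%R, 1%R. split; [lra|]. split; [lra|].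
    intros x x'. specialize (LI x x'). specialize (dG0 x x'). nra. }
  split; [exists rho; split; assumption|]. split.
  - exists rho, (@iota0 S G), 1%R. split; [exact CLrho|]. split; [exact CLi|].
    split; [lra|]. intros [y Hy]. rewrite Hri. unfold dG, word_dist; simpl.
    replace (pcomp (pinvp y) y) with (pid S) by (apply perm_ext; intro; simpl; rewrite pK; reflexivity).
    destruct (wl_spec (wlen_pid XG (T:=S))) as [_ Z].
    apply Nat.le_0_r in Z. rewrite Z. simpl. lra.
  - set (C := (INR K + INR M + 1)%R). exists C, 1%R.
    assert (PC : (0 < C)%R) by (unfold C; lra).
    split; [exact PC|]. split; [lra|]. intros a b. split.
    + specialize (LI a b). specialize (dG0 a b). unfold C. nra.
    + pose proof (LR (iota0 a) (iota0 b)) as L. rewrite !Hri in L.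
      specialize (dSV0 (iota0 a) (iota0 b)).
      set (d := @dSV S G XV (iota0 a) (iota0 b)) in *. set (e := @dG S G XG a b) in *.
      assert (He : (e <= C * d)%R) by (unfold C; nra).
      assert (H1 : (/ C * e <= / C * (C * d))%R).
      { apply Rmult_le_compat_l; [left; apply Rinv_0_lt_compat; exact PC| exact He]. }
      rewrite <- Rmult_assoc, Rinv_l, Rmult_1_l in H1 by lra. lra.
Qed.
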